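(* For any rational number $t$ with $1/2 < t \le 1$, there exist no minimally $t$-tough chordal graphs.
   Context: All graphs are finite, simple and undirected. A graph is chordal if it contains no induced cycle of length at least $4$. $\omega(H)$ denotes the number of components of $H$. A cutset of $G$ is a vertex set $S$ with $G-S$ disconnected. For positive real $t$, $G$ is $t$-tough if $\omega(G-S)\le |S|/t$ for every cutset $S$; the toughness $\tau(G)$ is the largest such $t$, with $\tau(K_n)=\infty$ for all $n\ge1$. $G$ is minimally $t$-tough if $\tau(G)=t$ and $\tau(G-e)<t$ for every edge $e$ of $G$. *)

(* Defs.v *)
From HB Require Import structures.
From mathcomp Require Import all_boot all_order all_algebra.
Set Implicit Arguments. Unset Strict Implicit. Unset Printing Implicit Defensive.
Import Order.TTheory GRing.Theory Num.Theory.
Local Open Scope ring_scope.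

(* A finite simple graph: vertex type T : finType, adjacency e : rel T,
   assumed symmetric and irreflexive in the theorem. *)

Definition del_verts (T : finType) (e : rel T) (S : {set T}) : rel T :=
  [rel x y | [&& e x y, x \notin S & y \notin S]].

Definition omega (T : finType) (e : rel T) (S : {set T}) : nat :=
  n_comp (del_verts e S) (~: S).

Definition cutset (T : finType) (e : rel T) (S : {set T}) : bool :=
  (1 < omega e S)%N.

(* G is t-tough: omega(G - S) <= |S| / t for every cutset S
   (written multiplicatively: t * omega(G-S) <= |S|). *)
Definition tough (T : finType) (e : rel T) (t : rat) : Prop :=
  forall S : {set T}, cutset e S -> t * (omega e S)%:R <= (#|S|)%:R.

(* tau(G) = t : t is the largest value for which G is t-tough.
   (Complete graphs are t-tough for every t, so tau(K_n) = infinity is never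
   equal to a rational t.) *)
Definition toughness_is (T : finType) (e : rel T) (t : rat) : Prop :=
  tough e t /\ forall t' : rat, t < t' -> ~ tough e t'.

Definition del_edge (T : finType) (e : rel T) (x y : T) : rel T :=
  [rel u v | e u v && ~~ (((u == x) && (v == y)) || ((u == y) && (v == x)))].

Definition minimally_tough (T : finType) (e : rel T) (t : rat) : Prop :=
  toughness_is e t /\
  forall x y : T, e x y -> exists t0 : rat, t0 < t /\ toughness_is (del_edge e x y) t0.

Definition induced_cycle (T : finType) (e : rel T) (n : nat) (f : 'I_n -> T) : Prop :=
  (3 <= n)%N /\ injective f /\
  forall i j : 'I_n,
    e (f i) (f j) = (val j == (val i).+1 %% n)%N || (val i == (val j).+1 %% n)%N.

Definition chordal (T : finType) (e : rel T) : Prop :=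
  forall (n : nat) (f : 'I_n -> T), (4 <= n)%N -> ~ induced_cycle e f.

(* Main.v *)
Require Import Defs.
From mathcomp Require Import all_boot all_order all_algebra.
From mathcomp Require Import zify lra.
Import Order.TTheory GRing.Theory Num.Theory.
Set Implicit Arguments. Unset Strict Implicit. Unset Printing Implicit Defensive.

Lemma connect_ind (T : finType) (e : rel T) (P : T -> Prop) x :
  P x -> (forall z w, P z -> e z w -> P w) -> forall y, connect e x y -> P y.
Proof.
move=> Px step y /connectP [p pth ->]; elim: p x Px pth => //= z p IH x Px /andP [exz pth].
exact: IH (step _ _ Px exz) pth.
Qed.

Lemma sym_dv (T : finType) (e : rel T) S : symmetric e -> symmetric (del_verts e S).
Proof. by move=> es x y; rewrite /del_verts /= es; case: (x \in S); case: (y \in S); rewrite ?andbF. Qed.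

Lemma sym_de (T : finType) (e : rel T) x y : symmetric e -> symmetric (del_edge e x y).
Proof. by move=> es u v; rewrite /del_edge /= es; case: (u == x); case: (v == x); case: (u == y); case: (v == y); rewrite ?andbF ?orbF. Qed.

Lemma ncomp_set (T : finType) (f : rel T) (a : {set T}) :
  n_comp f a = #|[set r | roots f r & r \in a]|.
Proof. by apply: eq_card => r; rewrite !inE. Qed.

Lemma ncomp_ge (T : finType) (f : rel T) (a A : {set T}) :
  symmetric f -> (forall p q, f p q -> q \in a) -> A \subset a ->
  {in A &, forall p q, connect f p q -> p = q} -> #|A| <= n_comp f a.
Proof.
move=> fs fa Aa Ainj; have cs := sym_connect_sym fs.
rewrite ncomp_set -(card_in_imset (f:=fingraph.root f)); last first.
  by move=> p q pA qA /(fingraph.rootP cs) c; apply: Ainj.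
apply: subset_leq_card; apply/subsetP => r /imsetP [p pA ->].
rewrite inE (roots_root cs) /=.
apply: (connect_ind (P := fun z => z \in a)) (fingraph.connect_root f p) => //.
  exact: (subsetP Aa).
by move=> z w _ /fa.
Qed.

Lemma roots_inj (T : finType) (f : rel T) r r' :
  symmetric f -> roots f r -> roots f r' -> connect f r r' -> r = r'.
Proof.
move=> fs /eqP rr /eqP rr' /(fingraph.rootP (sym_connect_sym fs)); by rewrite rr rr'.
Qed.

Lemma dv_in (T : finType) (e : rel T) S p q : del_verts e S p q -> q \in ~: S.
Proof. by rewrite /del_verts /= inE => /and3P []. Qed.

Lemma omega_le1 (T : finType) (e : rel T) S :
  symmetric e -> (forall p q, p != q -> e p q) -> omega e S <= 1.
Proof.
move=> es ec; rewrite /omega ncomp_set; apply/card_le1_eqP => r r'.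
rewrite !inE => /andP [rr rS] /andP [rr' r'S].
case: (eqVneq r r') => // /ec err'.
apply: (roots_inj (sym_dv S es)) => //; apply: connect1.
by rewrite /del_verts /= es err' rS r'S.
Qed.
Definition walk (T : finType) (e : rel T) (x0 : T) (q : seq T) :=
  forall k, k.+1 < size q -> e (nth x0 q k) (nth x0 q k.+1).

Lemma cycle_contra (T : finType) (e : rel T) : symmetric e -> irreflexive e -> chordal e ->
  forall (a x y : T) (Dp : pred T), x != y -> ~~ e x y -> e a x -> e a y ->
  (forall z, Dp z -> ~~ e a z) -> (forall z, Dp z -> z != a) ->
  forall n (q : seq T), size q <= n -> 2 <= size q -> nth x q 0 = x ->
  nth x q (size q).-1 = y ->
  walk e x q -> (forall k, 0 < k < (size q).-1 -> Dp (nth x q k)) -> False.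
Proof.
move=> es ei ch a x y Dp xy nexy eax eay Dna Dna' n.
elim: n => [|n IH] q szn sz2 q0 ql wq qD; first by have := leq_trans sz2 szn.
set N := size q in szn sz2 q0 ql wq qD.
case: (boolP [exists i : 'I_N, exists j : 'I_N, (i.+1 < j) && e (nth x q i) (nth x q j)]).
  move=> /existsP [[i Hi] /existsP [[j Hj] /andP /= [ij eij]]].
  pose d := j - i.+1.
  pose q' := mkseq (fun k => if k <= i then nth x q k else nth x q (k + d)) (N - d).
  have szq' : size q' = N - d by rewrite size_mkseq.
  apply: (IH q'); rewrite ?szq'.
  - rewrite /d; lia.
  - rewrite /d; lia.
  - by rewrite nth_mkseq /d //; lia.
  - rewrite nth_mkseq; last by rewrite /d; lia.
    have -> : ((N - d).-1 <= i) = false by apply/negbTE; rewrite -ltnNge /d; lia.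
    by rewrite (_ : _ + d = N.-1) // /d; lia.
  - move=> k; rewrite szq' => kl; rewrite !nth_mkseq; try (rewrite /d; lia).
    case: (leqP k.+1 i) => h1.
      by rewrite (ltnW h1) ?h1; apply: wq; lia.
    case: (leqP k i) => h2.
      have -> : k = i by lia.
      by rewrite (_ : i.+1 + d = j) // /d; lia.
    by rewrite addSn; apply: wq; rewrite /d; lia.
  - move=> k /andP [k0 kl]; rewrite nth_mkseq; last by rewrite /d; lia.
    case: (leqP k i) => h; apply: qD; rewrite /d; lia.
rewrite negb_exists => /forallP H.
have cl : forall i j, i.+1 < j -> j < N -> ~~ e (nth x q i) (nth x q j).
  move=> i j ij jN; have iN : i < N by lia.
  by have := H (Ordinal iN); rewrite negb_exists => /forallP /(_ (Ordinal jN)) /=; rewrite ij.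
have N3 : 2 < N.
  case: (eqVneq N 2) => [h|h]; last by lia.
  have := wq 0 ltac:(lia); rewrite q0 (_ : 1 = N.-1) ?ql ?(negbTE nexy) //.
  by rewrite h.
have nq : forall k l, k < l -> l < N -> nth x q k != nth x q l.
  move=> k l kl lN; apply/eqP => E.
  case: (ltngtP l k.+1) => [|h|h]; first by lia.
  - have l3 : k.+2 < l \/ l = k.+2 by lia.
    case: l3 => [l3|l3]; last subst l.
      have := cl k l.-1 ltac:(lia) ltac:(lia); rewrite E es.
      by rewrite (_ : l = l.-1.+1) ?wq //; lia.
    case: k E kl lN {h} => [|k] E kl lN.
      case: (ltngtP 3 N) => [h3|h3|h3]; first last.
      + by move: xy; rewrite -q0 -ql -h3 E eqxx.
      + by lia.
      by have := cl 0 3 isT h3; rewrite E wq.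
    have := cl k k.+3 ltac:(lia) lN; rewrite -E.
    by rewrite wq //; lia.
  - by have := wq k ltac:(lia); rewrite -h -E ei.
have na : forall k, k < N -> nth x q k != a.
  move=> k kN; case: (ltngtP k 0) => // [k0|->]; last first.
    by rewrite q0; apply/eqP => E; move: eax; rewrite E ei.
  case: (ltngtP k N.-1) => [h|h|->]; first by apply: Dna'; apply: qD; lia.
    by lia.
  by rewrite ql; apply/eqP => E; move: eay; rewrite E ei.
have ea : forall k, k < N -> e a (nth x q k) = (k == 0) || (k == N.-1).
  move=> k kN; case: (ltngtP k 0) => // [k0|->]; last by rewrite q0 eax.
  case: (ltngtP k N.-1) => [h|h|->]; last by rewrite ql eay orbT.
    by apply/negbTE; rewrite Dna //; apply: qD; lia.
  by lia.
pose g k := if k is k'.+1 then nth x q k' else a.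
have gadj : forall i j, i < N.+1 -> j < N.+1 ->
    e (g i) (g j) = (j == i.+1 %% N.+1) || (i == j.+1 %% N.+1).
  have key : forall i j, i <= j -> i < N.+1 -> j < N.+1 ->
      e (g i) (g j) = (j == i.+1 %% N.+1) || (i == j.+1 %% N.+1).
    move=> i j ij iN jN.
    case: i ij iN => [|k] ij iN; case: j ij jN => [|l] ij jN /=.
    - rewrite ei (@modn_small 1); lia.
    - rewrite ea; last by lia.
      rewrite (@modn_small 1); last by lia.
      case: (ltngtP l.+2 N.+1) => h; first by rewrite (modn_small h); lia.
        by lia.
      by rewrite h modnn; lia.
    - by lia.
    have m2 : forall m, m.+2 <= N.+1 -> (m.+2 %% N.+1 = m.+2) \/ (m.+2 = N.+1 /\ m.+2 %% N.+1 = 0).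
      move=> m hm; case: (ltngtP m.+2 N.+1) => h; first by left; rewrite modn_small.
        by lia.
      by right; rewrite h modnn.
    case: (m2 k ltac:(lia)) => [[->]|[h1 ->]]; case: (m2 l ltac:(lia)) => [[->]|[h2 ->]];
    (case: (ltngtP k l) => h; [ | by lia | by rewrite h ei; lia]);
    (case: (eqVneq l k.+1) => [hl|hl]; 
      [ by subst l; rewrite wq; lia | by rewrite (negbTE (cl k l _ _)); lia ]).
  move=> i j iN jN; case: (leqP i j) => h; first exact: key.
  by rewrite es orbC key //; apply: ltnW.
apply: (ch N.+1 (fun i : 'I_N.+1 => g (val i))); first by lia.
split; first by lia.
split.
  move=> [[|i] Hi] [[|j] Hj] /= E; apply/val_inj => //=.
  - by move: (na j ltac:(lia)); rewrite -E eqxx.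
  - by move: (na i ltac:(lia)); rewrite E eqxx.
  case: (ltngtP i j) => h; last by rewrite h.
    by move: (nq i j h ltac:(lia)); rewrite E eqxx.
  by move: (nq j i h ltac:(lia)); rewrite E eqxx.
by move=> [i Hi] [j Hj] /=; apply: gadj.
Qed.

Definition simplicial_in (T : finType) (e : rel T) (W : {set T}) (s : T) :=
  forall p q, p \in W -> q \in W -> e s p -> e s q -> p != q -> e p q.

Lemma path_all (T : finType) (f : rel T) (R : {set T}) d p :
  (forall u v, f u v -> v \in R) -> d \in R -> path f d p -> all (mem R) (d :: p).
Proof.
move=> fR; elim: p d => [|z p IH] d dR /=; first by rewrite dR.
move=> /andP [fdz pz]; rewrite dR /=; exact: IH (fR _ _ fdz) pz.
Qed.

Lemma claim (T : finType) (e : rel T) : symmetric e -> irreflexive e -> chordal e ->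
  forall n (W : {set T}) a, #|W| <= n -> a \in W -> forall x0, x0 \in W -> x0 != a ->
  ~~ e a x0 -> exists s, [/\ s \in W, s != a, ~~ e a s & simplicial_in e W s].
Proof.
move=> es ei ch; elim => [|n IH] W a szW aW x0 x0W x0a ax0.
  by move: szW; rewrite leqn0 => /eqP /cards0_eq W0; move: aW; rewrite W0 inE.
pose R := [set z in W | (z != a) && ~~ e a z].
pose eR := [rel p q | [&& e p q, p \in R & q \in R]].
pose D := [set z | connect eR x0 z].
have x0R : x0 \in R by rewrite inE x0W x0a.
have eRs : symmetric eR by move=> u v; rewrite /eR /= es; case: (u \in R); case: (v \in R); rewrite ?andbF.
have DR : forall z, z \in D -> z \in R.
  move=> z; rewrite inE; apply: (connect_ind (P := fun z => z \in R)) => //.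
  by move=> u v _ /and3P [].
have Dcl : forall z w, z \in D -> w \in R -> e z w -> w \in D.
  move=> z w zD wR ezw; rewrite inE; apply: connect_trans (_ : connect eR z w).
    by move: zD; rewrite inE.
  by apply: connect1; rewrite /eR /= ezw wR DR.
have Dconn : forall d1 d2, d1 \in D -> d2 \in D -> connect eR d1 d2.
  move=> d1 d2; rewrite !inE => h1 h2.
  have h1' : connect eR d1 x0 by rewrite (sym_connect_sym eRs).
  exact: connect_trans h1' h2.
pose M := [set m in W | (m \notin D) && [exists d in D, e m d]].
have Ma : forall m, m \in M -> e a m.
  move=> m; rewrite inE => /and3P [mW mD /existsP [d /andP [dD emd]]].
  have := DR d dD; rewrite inE => /and3P [_ da nad].
  case: (boolP (m \in R)) => mR; first by move: mD; rewrite (Dcl d m dD mR) // es.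
  move: mR; rewrite inE mW /= negb_and !negbK => /orP [/eqP ma|h]; last exact: h.
  by move: nad; rewrite -ma emd.
have Mcl : forall m1 m2, m1 \in M -> m2 \in M -> m1 != m2 -> e m1 m2.
  move=> m1 m2 m1M m2M m12; apply/negPn/negP => nem.
  have := m1M; rewrite inE => /and3P [_ _ /existsP [d1 /andP [d1D em1]]].
  have := m2M; rewrite inE => /and3P [_ _ /existsP [d2 /andP [d2D em2]]].
  have /connectP [p pth lp] := Dconn d1 d2 d1D d2D.
  have eRR : forall u v, eR u v -> v \in R by move=> u v /and3P [].
  have allR := path_all eRR (DR _ d1D) pth.
  pose s := rcons (d1 :: p) m2.
  pose q := m1 :: s.
  have hR : forall z, z \in R -> ~~ e a z /\ z != a.
    by move=> z; rewrite inE => /and3P [].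
  apply: (cycle_contra es ei ch (Dp := mem R) m12 nem (Ma _ m1M) (Ma _ m2M)
    (fun z h => (hR z h).1) (fun z h => (hR z h).2) (leqnn (size q))).
  - by rewrite /q /s /= size_rcons.
  - by [].
  - by rewrite nth_last /q /s /= last_rcons.
  - have pq : path e m1 s.
      rewrite /s rcons_path /= em1 -lp (sub_path _ pth) /=; last by move=> u v /and3P [].
      by rewrite es.
    by move=> k kq; apply: (pathP m1 pq k kq).
  - move=> [|k] //; rewrite /q /s /= size_rcons /= => kl.
    rewrite -rcons_cons nth_rcons (_ : k < size (d1 :: p)) //; apply: (allP allR); exact: mem_nth.
pose W' := D :|: M.
have aD : a \notin D by apply/negP => /DR; rewrite inE eqxx andbF.
have aM : a \notin M by apply/negP => /Ma; rewrite ei.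
have W'W : W' \subset W.
  apply/subsetP => z; rewrite inE => /orP [/DR|]; rewrite inE; first by case/and3P.
  by case/andP.
have szW' : #|W'| <= n.
  have : W' \proper W by apply/properP; split => //; exists a => //; rewrite inE negb_or aD aM.
  by move/proper_card => h; rewrite -ltnS; apply: leq_trans h szW.
have nbrD : forall d p, d \in D -> p \in W -> e d p -> p \in W'.
  move=> d p dD pW edp; rewrite inE.
  case: (boolP (p \in R)) => pR; first by rewrite (Dcl d p dD pR edp).
  have := DR d dD; rewrite inE => /and3P [_ da nad].
  move: pR; rewrite inE pW /= negb_and !negbK => /orP [/eqP pa|eap].
    by move: nad; rewrite -pa es edp.
  have pD : p \notin D by apply/negP => /DR; rewrite inE eap !andbF.
  apply/orP; right; rewrite inE pW pD /=; apply/existsP; exists d; by rewrite dD es.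
have lift : forall s, s \in D -> simplicial_in e W' s -> simplicial_in e W s.
  move=> s sD sW p q pW qW esp esq pq.
  exact: sW (nbrD s p sD pW esp) (nbrD s q sD qW esq) esp esq pq.
have fin : forall s, s \in D -> simplicial_in e W' s ->
    exists s, [/\ s \in W, s != a, ~~ e a s & simplicial_in e W s].
  move=> s sD sW; exists s; have := DR s sD; rewrite inE => /and3P [? ? ?].
  by split => //; apply: lift.
case: (boolP [forall p in W', forall q in W', (p != q) ==> e p q]).
  move=> /forallP cl; apply: (fin x0); first by rewrite inE.
  move=> p q pW qW _ _ pq.
  by have := cl p; rewrite pW => /forallP /(_ q); rewrite qW pq.
rewrite negb_forall => /existsP [p]; rewrite negb_imply => /andP [pW'].
rewrite negb_forall => /existsP [q]; rewrite negb_imply => /andP [qW'].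
rewrite negb_imply => /andP [pq nepq].
have finb : forall b z, b \in W' -> z \in W' -> z != b -> ~~ e b z ->
    (forall m, m \in M -> m != b -> e b m) ->
    exists s, [/\ s \in W, s != a, ~~ e a s & simplicial_in e W s].
  move=> b z bW zW zb nebz hM.
  have [s [sW sb nbs ss]] := IH W' b szW' bW z zW zb nebz.
  apply: (fin s) => //.
  move: sW; rewrite inE => /orP [//|sM].
  by move: nbs; rewrite hM.
have sWp := subsetP W'W.
case: (boolP (p \in M)) => pM.
  apply: (finb p q) => //; first by rewrite eq_sym.
  by move=> m mM mp; apply: Mcl; rewrite // eq_sym.
case: (boolP (q \in M)) => qM.
  apply: (finb q p) => //; first by rewrite es.
  by move=> m mM mq; apply: Mcl; rewrite // eq_sym.
have pD : p \in D by move: pW'; rewrite inE (negbTE pM) orbF.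
case: (boolP [forall m in M, e p m]).
  move=> /forallP hp; apply: (finb p q) => //; first by rewrite eq_sym.
  by move=> m mM _; have := hp m; rewrite mM.
rewrite negb_forall => /existsP [m]; rewrite negb_imply => /andP [mM nepm].
have mD : m \notin D by move: mM; rewrite inE => /and3P [].
apply: (finb m p) => //.
- by rewrite inE mM orbT.
- by apply/eqP => E; move: mD; rewrite -E pD.
- by rewrite es.
- by move=> m' m'M m'm; apply: Mcl; rewrite // eq_sym.
Qed.

Lemma conn_isol (T : finType) (g : rel T) z q : (forall w, ~~ g z w) -> connect g z q -> q = z.
Proof.
move=> h; apply: (connect_ind (P := fun w => w = z)) => // w w' -> gz.
by move: (h w'); rewrite gz.
Qed.

Lemma root_notin (T : finType) (g : rel T) (S : {set T}) p :
  p \in ~: S -> fingraph.root (del_verts g S) p \in ~: S.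
Proof.
move=> pS; apply: (connect_ind (P := fun z => z \in ~: S)) (fingraph.connect_root _ p) => //.
by move=> z w _ /dv_in.
Qed.

Lemma cutv (T : finType) (e e1 : rel T) (S : {set T}) (u c y a : T) :
  symmetric e -> symmetric e1 -> irreflexive e ->
  (forall p q, e p q -> p != c -> q != c -> e1 p q) ->
  (forall z, e u z -> z = c \/ z = y) -> (forall z, z \in S -> z = u) ->
  a != c -> y != c -> a != y ->
  connect (del_verts e1 S) a c -> ~~ connect (del_verts e1 S) y c ->
  1 < omega e [set c].
Proof.
move=> es e1s ei he1 Nu Su ac yc ay conac nyc.
pose f1 := del_verts e1 S; pose f2 := del_verts e [set c].
have f1s : symmetric f1 := sym_dv S e1s.
have isoS : forall z, z \in S -> connect f1 z c -> c = z.
  move=> z zS; apply: conn_isol => w; by rewrite /f1 /del_verts /= zS andbF.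
have inv : forall w, connect f2 a w -> connect f1 w c /\ w != c.
  apply: (connect_ind (P := fun w => connect f1 w c /\ w != c)) => // z w [zc znc].
  rewrite /f2 /del_verts /= !inE => /and3P [ezw _ wnc]; split => //.
  have zS : z \notin S by apply/negP => zS; move: znc; rewrite (isoS z zS zc) eqxx.
  have wS : w \notin S.
    apply/negP => /Su wu; move: ezw; rewrite wu es => /Nu [zc'|zy].
      by move: znc; rewrite zc' eqxx.
    by move: nyc; rewrite -zy zc.
  apply: connect_trans zc; rewrite (sym_connect_sym f1s); apply: connect1.
  by rewrite /f1 /del_verts /= zS wS he1.
have A2 : #|[set a; y]| = 2 by rewrite cards2 ay.
rewrite /omega -A2; apply: ncomp_ge.
- exact: sym_dv.
- by move=> p q /dv_in.
- by apply/subsetP => z; rewrite !inE => /orP [] /eqP ->; rewrite ?ac ?yc.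
move=> p q; rewrite !inE => /orP [] /eqP -> /orP [] /eqP -> // h.
  by have := (inv y h).1; rewrite (negbTE nyc).
rewrite (sym_connect_sym (sym_dv _ es)) in h.
by have := (inv y h).1; rewrite (negbTE nyc).
Qed.

Lemma conn_into (T : finType) (g : rel T) (S : {set T}) p q :
  symmetric g -> q \in S -> connect (del_verts g S) p q -> p = q.
Proof.
move=> gs qS; rewrite (sym_connect_sym (sym_dv S gs)).
by apply: conn_isol => w; rewrite /del_verts /= qS andbF.
Qed.

Lemma klemma (T : finType) (e : rel T) (S : {set T}) (u x y p : T) :
  symmetric e -> irreflexive e -> u \in S -> x \notin S -> y \notin S ->
  (forall z, e u z -> z != x -> z != y -> z \in S) -> p \notin S ->
  forall q, connect (del_verts e (S :\ u)) p q ->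
  connect (del_verts (del_edge e x y) S) p q \/
  (((p == u) || connect (del_verts (del_edge e x y) S) p x || connect (del_verts (del_edge e x y) S) p y) /\
   ((q == u) || connect (del_verts (del_edge e x y) S) q x || connect (del_verts (del_edge e x y) S) q y)).
Proof.
move=> es ei uS xS yS NS pS.
set f1 := del_verts (del_edge e x y) S.
have f1s : symmetric f1 by apply: sym_dv; apply: sym_de.
pose K z := (z == u) || connect f1 z x || connect f1 z y.
have Kx : K x by rewrite /K connect0 orbT.
have Ky : K y by rewrite /K connect0 !orbT.
have Kp : forall z, connect f1 p z -> (z == x) || (z == y) -> K p.
  by move=> z pz /orP [] /eqP zx; rewrite /K -zx pz !orbT.
apply: (connect_ind (P := fun q => connect f1 p q \/ (K p /\ K q))); first by left.
move=> z w Pz; rewrite /del_verts /= !inE !negb_and !negbK => /and3P [ezw zS' wS'].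
case: (eqVneq w u) => [wu|wu].
  have zu : z != u by apply/eqP => zu; move: ezw; rewrite zu wu ei.
  have zS : z \notin S by move: zS'; rewrite (negbTE zu).
  have zxy : (z == x) || (z == y).
    case: (eqVneq z x) => // zx; case: (eqVneq z y) => // zy.
    by move: zS; rewrite NS // -wu es.
  right; split; last by rewrite /K wu eqxx.
  by case: Pz => [pz|[]//]; apply: Kp pz zxy.
have wS : w \notin S by move: wS'; rewrite (negbTE wu).
have wxy : z == u -> (w == x) || (w == y).
  move=> /eqP zu; case: (eqVneq w x) => // wx; case: (eqVneq w y) => // wy.
  by move: wS; rewrite NS // -zu.
case: (eqVneq z u) => [zu|zu].
  case: Pz => [pz|[Kpp _]].
    have pu : connect f1 p u by rewrite -zu.
    by move: pS; rewrite (conn_into (sym_de x y es) uS pu) uS.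
  right; split => //; case/orP: (wxy (introT eqP zu)) => /eqP ->; [exact: Kx | exact: Ky].
have zS : z \notin S by move: zS'; rewrite (negbTE zu).
case: (boolP ((z == x) && (w == y) || (z == y) && (w == x))) => hd.
  have zxy : (z == x) || (z == y) by case/orP: hd => /andP [-> _]; rewrite ?orbT.
  have Kw : K w by case/orP: hd => /andP [_ /eqP ->].
  by right; split => //; case: Pz => [pz|[]//]; apply: Kp pz zxy.
have f1zw : f1 z w by rewrite /f1 /del_verts /del_edge /= ezw hd zS wS.
case: Pz => [pz|[Kpp Kz]]; first by left; apply: connect_trans pz (connect1 f1zw).
right; split => //; move: Kz; rewrite /K (negbTE zu) /= => /orP [] h; apply/orP.
  left; apply/orP; right; apply: connect_trans h; rewrite (sym_connect_sym f1s); exact: connect1.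
right; apply: connect_trans h; rewrite (sym_connect_sym f1s); exact: connect1.
Qed.

Local Open Scope ring_scope.

Lemma rat1 (t : rat) (om s : nat) : 1 / 2 < t -> (2 <= om)%N -> (s <= 1)%N ->
  t * om%:R <= s%:R -> False.
Proof.
move=> ht om2 s1 h.
have h1 : (2%:R : rat) <= om%:R by rewrite ler_nat.
have h2 : (s%:R : rat) <= 1%:R by rewrite ler_nat.
have : t * 2%:R <= t * om%:R by apply: ler_wpM2l => //; lra.
lra.
Qed.

Lemma rat2 (t : rat) (n1 om s' : nat) : 0 <= t -> t <= 1 -> (n1 <= om + 1)%N ->
  t * om%:R <= s'%:R -> s'.+1%:R < t * n1%:R -> False.
Proof.
move=> t0 t1 h1 h2 h3.
have h4 : (n1%:R : rat) <= om%:R + 1 by rewrite natr1 ler_nat -addn1.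
have : t * n1%:R <= t * (om%:R + 1) by apply: ler_wpM2l.
rewrite -natr1 in h3; lra.
Qed.

Lemma rat3 (t : rat) (s : nat) : t <= 1 -> s%:R < t * (2%N)%:R -> (s <= 1)%N.
Proof.
move=> t1 h; have : (s%:R : rat) < 2%:R by lra.
by rewrite ltr_nat.
Qed.

Theorem mainTheorem2 (t : rat) (ht : 1 / 2 < t <= 1)
  (T : finType) (e : rel T) (esym : symmetric e) (eirr : irreflexive e) :
  chordal e -> ~ minimally_tough e t.
Proof.
move=> ch [[tt tmax] minE]; case/andP: ht => ht1 ht2.
have t0 : 0 <= t by lra.
have es := esym.
case: (boolP [forall p, forall q, (p != q) ==> e p q]) => [/forallP cmp|].
  apply: (tmax (t + 1)); first lra.
  move=> S; rewrite /cutset => c; exfalso.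
  have : (omega e S <= 1)%N.
    apply: omega_le1 => // p q pq.
    by have := cmp p; move/forallP/(_ q); rewrite pq.
  by rewrite leqNgt c.
rewrite negb_forall => /existsP [a]; rewrite negb_forall => /existsP [x0].
rewrite negb_imply => /andP [ax0 nax0].
have [u [_ ua nau simp]] := claim es eirr ch (leqnn #|[set: T]|) (in_setT a) (in_setT x0)
  (ltac:(by rewrite eq_sym) : x0 != a) nax0.
have simp' : forall p q, e u p -> e u q -> p != q -> e p q :=
  fun p q => simp p q (in_setT p) (in_setT q).
have nua : ~~ e u a by rewrite es.
pose Nu := [set p | e u p].
case: (leqP #|Nu| 1) => hN.
  have c : (1 < omega e Nu)%N.
    have A2 : #|[set u; a]| = 2%N by rewrite cards2 ua.
    rewrite /omega -A2; apply: ncomp_ge.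
    - exact: sym_dv.
    - by move=> p q /dv_in.
    - by apply/subsetP => z; rewrite !inE => /orP [] /eqP ->; rewrite ?eirr.
    have iso : forall q, connect (del_verts e Nu) u q -> q = u.
      move=> q; apply: conn_isol => w; rewrite /del_verts /= !inE.
      by case: (e u w); rewrite ?andbF.

    move=> p q; rewrite !inE => /orP [] /eqP -> /orP [] /eqP -> // h.
      by move: ua; rewrite (iso _ h) eqxx.
    rewrite (sym_connect_sym (sym_dv _ es)) in h.
    by move: ua; rewrite (iso _ h) eqxx.
  exact: (rat1 ht1 c hN (tt _ c)).
have [x [y [xN yN xy]]] : exists x y, [/\ x \in Nu, y \in Nu & x != y] by apply/card_gt1P.
rewrite !inE in xN yN.
have exy := simp' x y xN yN xy.
have [t1 [t1t [_ tmax1]]] := minE x y exy.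
have ntough : ~ tough (del_edge e x y) t := tmax1 t t1t.
have ux : u != x by apply/eqP => E; move: xN; rewrite E eirr.
have uy : u != y by apply/eqP => E; move: yN; rewrite E eirr.
set e1 := del_edge e x y in ntough *.
have e1s : symmetric e1 := sym_de x y es.
case: (boolP [exists S : {set T}, cutset e1 S && ~~ (t * (omega e1 S)%:R <= #|S|%:R)]); last first.
  rewrite negb_exists => /forallP h; exfalso; apply: ntough => S c.
  by have := h S; rewrite c /= negbK.
move=> /existsP [S /andP [cS]]; rewrite -ltNge => viol.
set f1 := del_verts e1 S.
have f1s : symmetric f1 := sym_dv S e1s.
case: (boolP ((x \in S) || (y \in S) || connect f1 x y)) => hA.
  have eqc : connect f1 =2 connect (del_verts e S).
    move=> p q; apply/idP/idP; apply: connect_sub => {p q} p q.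
      rewrite /f1 /del_verts /e1 /del_edge /= => /and3P [/andP [epq _] pS qS].
      by apply: connect1; rewrite /= epq pS qS.
    rewrite /del_verts /= => /and3P [epq pS qS].
    case: (boolP ((p == x) && (q == y) || (p == y) && (q == x))) => hd; last first.
      by apply: connect1; rewrite /f1 /del_verts /e1 /del_edge /= epq hd pS qS.
    case/orP: hd => /andP [/eqP px /eqP qy]; subst p q.
      by move: hA; rewrite (negbTE pS) (negbTE qS).
    by move: hA; rewrite (negbTE pS) (negbTE qS) /= (sym_connect_sym f1s).
  have eqo : omega e1 S = omega e S by rewrite /omega; apply: eq_n_comp.
  rewrite /cutset eqo in cS; rewrite eqo in viol.
  by move: viol; rewrite ltNge (tt S cS).
move: hA; rewrite !negb_or => /andP [/andP [xS yS] nxy].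
have uS : u \in S.
  apply/negPn/negP => uS; move: nxy; apply/negP/negPn.
  apply: (@connect_trans _ _ u); apply: connect1.
    by rewrite /f1 /del_verts /e1 /del_edge /= (negbTE uy) (negbTE ux) !andbF /= es xN xS uS.
  by rewrite /f1 /del_verts /e1 /del_edge /= (negbTE uy) (negbTE ux) /= yN uS yS.
have NS : forall z, e u z -> z != x -> z != y -> z \in S.
  move=> z ez zx zy; apply/negPn/negP => zS; move: nxy; apply/negP/negPn.
  apply: (@connect_trans _ _ z); apply: connect1.
    rewrite /f1 /del_verts /e1 /del_edge /= (negbTE zy) (negbTE zx) !andbF /= xS zS.
    by rewrite simp' // eq_sym.
  rewrite /f1 /del_verts /e1 /del_edge /= (negbTE zy) (negbTE zx) /= yS zS.
  by rewrite simp'.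
pose R1 := [set r | roots f1 r & r \in ~: S].
have cR1 : #|R1| = omega e1 S by rewrite /omega ncomp_set.
pose A := R1 :\ fingraph.root f1 x.
have cA : (omega e1 S <= #|A| + 1)%N.
  rewrite -cR1 (cardsD1 (fingraph.root f1 x) R1) addnC leq_add2l.
  by case: (_ \in _).
have AS' : (#|A| <= omega e (S :\ u))%N.
  apply: ncomp_ge.
  - exact: sym_dv.
  - by move=> p q /dv_in.
  - apply/subsetP => r; rewrite !inE => /andP [_ /andP [_ rS]].
    by rewrite (negbTE rS) andbF.
  move=> r r'; rewrite !inE => /andP [rx /andP [rr rS]] /andP [rx' /andP [rr' rS']] h.
  case: (klemma es eirr uS xS yS NS rS h) => [c1|[Kr Kr']].
    exact: roots_inj f1s rr rr' c1.
  have ru : (r == u) = false by apply/negbTE; apply: contraNneq rS => ->.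
  have r'u : (r' == u) = false by apply/negbTE; apply: contraNneq rS' => ->.
  rewrite ru /= in Kr; rewrite r'u /= in Kr'.
  have nx : forall z, roots f1 z -> z != fingraph.root f1 x -> ~~ connect f1 z x.
    move=> z /eqP zr zx; apply/negP => /(fingraph.rootP (sym_connect_sym f1s)) E.
    by move: zx; rewrite -E zr eqxx.
  rewrite (negbTE (nx r rr rx)) /= in Kr; rewrite (negbTE (nx r' rr' rx')) /= in Kr'.
  apply: (roots_inj f1s rr rr'); apply: (connect_trans Kr).
  by rewrite (sym_connect_sym f1s).
have cSu : #|S| = (#|S :\ u|).+1 by rewrite (cardsD1 u S) uS.
case: (leqP 3 (omega e1 S)) => h3.
  have c' : (1 < omega e (S :\ u))%N.
    apply: leq_trans AS'; have := leq_trans h3 cA; by rewrite addn1 ltnS.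
  have := tt _ c'; rewrite /cutset in cS.
  move=> h; rewrite cSu in viol.
  have hh : (omega e1 S <= omega e (S :\ u) + 1)%N by apply: leq_trans cA _; rewrite leq_add2r.
  exact: (rat2 t0 ht2 hh h viol).
have n2 : omega e1 S = 2%N by apply/eqP; rewrite eqn_leq -ltnS h3 /=; exact: cS.
rewrite n2 in viol.
have s1 := rat3 ht2 viol.
have Su : forall z, z \in S -> z = u.
  by move/card_le1_eqP : s1 => h z zS; apply: h.
have Nu2 : forall z, e u z -> z = x \/ z = y.
  move=> z ez; case: (eqVneq z x) => [->|zx]; first by left.
  case: (eqVneq z y) => [->|zy]; first by right.
  by have E := Su z (NS z ez zx zy); move: ez; rewrite E eirr.
have ax : a != x by apply: contraNneq nua => ->.
have ay : a != y by apply: contraNneq nua => ->.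
have aS : a \in ~: S by rewrite inE; apply/negP => /Su E; move: ua; rewrite E eqxx.
have cs := sym_connect_sym f1s.
have R1eq : R1 = [set fingraph.root f1 x; fingraph.root f1 y].
  apply/eqP; rewrite eq_sym eqEcard; apply/andP; split.
    apply/subsetP => z; rewrite !inE => /orP [] /eqP ->; rewrite (roots_root cs) /=;
      rewrite -in_setC; apply: root_notin; by rewrite inE.
  rewrite cR1 n2 cards2; case: eqP => // E.
  have cxy : connect f1 x y by apply/(fingraph.rootP cs).
  by rewrite cxy in nxy.
have raR : fingraph.root f1 a \in R1.
  by rewrite inE (roots_root cs) /=; apply: root_notin.
rewrite R1eq !inE in raR; case/orP: raR => /eqP E.
  have cax : connect f1 a x by apply/(fingraph.rootP cs).
  have nyx : ~~ connect f1 y x by rewrite cs.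
  have he1 : forall p q, e p q -> p != x -> q != x -> e1 p q.
    by move=> p q epq px qx; rewrite /e1 /del_edge /= epq (negbTE px) (negbTE qx) /= ?andbF.
  have c2 := cutv es e1s eirr he1 Nu2 Su ax (ltac:(by rewrite eq_sym) : y != x) ay cax nyx.
  by have := tt _ c2; rewrite cards1 => h; exact: (rat1 ht1 c2 (leqnn 1) h).
have cay : connect f1 a y by apply/(fingraph.rootP cs).
have he1 : forall p q, e p q -> p != y -> q != y -> e1 p q.
  by move=> p q epq py qy; rewrite /e1 /del_edge /= epq (negbTE py) (negbTE qy) /= ?andbF.
have Nu2' : forall z, e u z -> z = y \/ z = x by move=> z /Nu2 [] ->; [right|left].
have c2 := cutv es e1s eirr he1 Nu2' Su ay xy ax cay nxy.
by have := tt _ c2; rewrite cards1 => h; exact: (rat1 ht1 c2 (leqnn 1) h).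
Qed.
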